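(* Let $\pi:\Gamma\to\Gamma_0$ be a surjective group homomorphism, $\mathcal H$ a Hilbert space and $\mu:\Gamma_0\to U(\mathcal H)$ a map with $\mu(e)=\mathrm{Id}$. Then (1) $\mathrm{def}(\mu)=\mathrm{def}(\mu\circ\pi)$, and (2) $\min(D(\mu\circ\pi),\sqrt3)=\min(D(\mu),\sqrt3)$.
   Context: For maps $\mu,\nu:\Gamma\to U(\mathcal H)$ put $\|\mu-\nu\|=\sup_\gamma\|\mu(\gamma)-\nu(\gamma)\|$ (operator norm), $D(\mu)=\inf\{\|\mu-\nu\|:\nu\in\mathrm{Hom}(\Gamma,U(\mathcal H))\}$ and $\mathrm{def}(\mu)=\sup_{x,y\in\Gamma}\|\mu(xy)-\mu(x)\mu(y)\|$. *)

(* Defs.v *)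
From Stdlib Require Import Reals Lra Classical ClassicalEpsilon.
Open Scope R_scope.

Record Cx := mkC { re : R; im : R }.
Definition Cadd (a b : Cx) : Cx := mkC (re a + re b) (im a + im b).
Definition Cmul (a b : Cx) : Cx :=
  mkC (re a * re b - im a * im b) (re a * im b + im a * re b).
Definition Cconj (a : Cx) : Cx := mkC (re a) (- im a).
Definition C1 : Cx := mkC 1 0.

Record InnerProductSpace := {
  vec :> Type;
  vadd : vec -> vec -> vec;
  vzero : vec;
  vopp : vec -> vec;
  vscal : Cx -> vec -> vec;
  inner : vec -> vec -> Cx;
  vaddA : forall x y z, vadd x (vadd y z) = vadd (vadd x y) z;
  vaddC : forall x y, vadd x y = vadd y x;
  vadd0 : forall x, vadd x vzero = x;
  vaddN : forall x, vadd x (vopp x) = vzero;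
  vscal1 : forall x, vscal C1 x = x;
  vscalA : forall a b x, vscal a (vscal b x) = vscal (Cmul a b) x;
  vscalDr : forall a x y, vscal a (vadd x y) = vadd (vscal a x) (vscal a y);
  vscalDl : forall a b x, vscal (Cadd a b) x = vadd (vscal a x) (vscal b x);
  innerDl : forall x y z, inner (vadd x y) z = Cadd (inner x z) (inner y z);
  innerZl : forall a x y, inner (vscal a x) y = Cmul a (inner x y);
  innerC : forall x y, inner y x = Cconj (inner x y);
  inner_ge0 : forall x, 0 <= re (inner x x);
  inner_eq0 : forall x, re (inner x x) = 0 -> x = vzero
}.

Definition vnorm {H : InnerProductSpace} (x : H) : R := sqrt (re (inner H x x)).
Definition vsub {H : InnerProductSpace} (x y : H) : H := vadd H x (vopp H y).

Definition complete (H : InnerProductSpace) : Prop :=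
  forall u : nat -> H,
    (forall eps, 0 < eps -> exists N, forall m n, (N <= m)%nat -> (N <= n)%nat ->
       vnorm (vsub (u m) (u n)) < eps) ->
    exists l : H, forall eps, 0 < eps -> exists N, forall n, (N <= n)%nat ->
       vnorm (vsub (u n) l) < eps.

Record HilbertSpace := {
  hips :> InnerProductSpace;
  hcomplete : complete hips
}.

Definition linear_op {H : InnerProductSpace} (T : H -> H) : Prop :=
  (forall x y, T (vadd H x y) = vadd H (T x) (T y)) /\
  (forall a x, T (vscal H a x) = vscal H a (T x)).

Definition unitary {H : InnerProductSpace} (T : H -> H) : Prop :=
  linear_op T /\ (forall x y, inner H (T x) (T y) = inner H x y) /\
  (forall y, exists x, T x = y).

Lemma Rsup_spec_ex (E : R -> Prop) :
  exists l, is_lub E l \/ ((~ exists m, is_lub E m) /\ l = 0).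
Proof.
  destruct (classic (exists m, is_lub E m)) as [[m Hm]|Hn].
  - exists m; left; exact Hm.
  - exists 0; right; split; [exact Hn | reflexivity].
Qed.

(* least upper bound of E when it exists (0 otherwise; never used here,
   since all the sets below are nonempty and bounded) *)
Definition Rsup (E : R -> Prop) : R :=
  proj1_sig (constructive_indefinite_description _ (Rsup_spec_ex E)).

Definition Rinf (E : R -> Prop) : R := - Rsup (fun r => E (- r)).

Definition opnorm {H : InnerProductSpace} (A : H -> H) : R :=
  Rsup (fun r => exists x : H, vnorm x <= 1 /\ r = vnorm (A x)).

Record Group := {
  gcar :> Type;
  gmul : gcar -> gcar -> gcar;
  gone : gcar;
  ginv : gcar -> gcar;
  gmulA : forall x y z, gmul x (gmul y z) = gmul (gmul x y) z;
  gmul1 : forall x, gmul x gone = x;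
  gmulV : forall x, gmul x (ginv x) = gone
}.

Definition group_hom (G K : Group) (f : G -> K) : Prop :=
  forall x y, f (gmul G x y) = gmul K (f x) (f y).

Definition unitary_map {G : Group} {H : InnerProductSpace} (mu : G -> H -> H) : Prop :=
  forall g, unitary (mu g).

Definition unitary_rep {G : Group} {H : InnerProductSpace} (nu : G -> H -> H) : Prop :=
  unitary_map nu /\ forall x y (v : H), nu (gmul G x y) v = nu x (nu y v).

Definition mapdist {G : Group} {H : InnerProductSpace} (mu nu : G -> H -> H) : R :=
  Rsup (fun r => exists g : G, r = opnorm (fun v => vsub (mu g v) (nu g v))).

Definition Dist {G : Group} {H : InnerProductSpace} (mu : G -> H -> H) : R :=
  Rinf (fun r => exists nu, unitary_rep nu /\ r = mapdist mu nu).

Definition defect {G : Group} {H : InnerProductSpace} (mu : G -> H -> H) : R :=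
  Rsup (fun r => exists x y : G,
          r = opnorm (fun v => vsub (mu (gmul G x y) v) (mu x (mu y v)))).

(* Main.v *)
Require Import Defs.
From Stdlib Require Import Reals Lra Classical ClassicalEpsilon FunctionalExtensionality PropExtensionality.
Open Scope R_scope.

Definition nrm2 {H : InnerProductSpace} (x : H) : R := re (inner H x x).

Lemma vadd0l (H : InnerProductSpace) (x : H) : vadd H (vzero H) x = x.
Proof. rewrite vaddC; apply vadd0. Qed.

Lemma vopp_uniq (H : InnerProductSpace) (a w : H) : vadd H a w = vzero H -> w = vopp H a.
Proof.
  intro E. rewrite <- (vadd0 H w). rewrite <- (vaddN H a). rewrite vaddA.
  rewrite (vaddC H w a), E. apply vadd0l.
Qed.

Lemma vcancel (H : InnerProductSpace) (a : H) : a = vadd H a a -> a = vzero H.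
Proof.
  intro E. transitivity (vadd H (vadd H a a) (vopp H a)).
  - rewrite <- vaddA, vaddN, vadd0; reflexivity.
  - rewrite <- E; apply vaddN.
Qed.

Lemma voppK (H : InnerProductSpace) (a : H) : vopp H (vopp H a) = a.
Proof. symmetry; apply vopp_uniq. rewrite vaddC; apply vaddN. Qed.

Lemma vsub0_eq (H : InnerProductSpace) (a b : H) : vsub a b = vzero H -> a = b.
Proof.
  unfold vsub. intro E. apply vopp_uniq in E.
  rewrite <- (voppK H b), E, voppK. reflexivity.
Qed.

Lemma lin0 (H : InnerProductSpace) (T : H -> H) : linear_op T -> T (vzero H) = vzero H.
Proof.
  intros [L1 L2]. apply vcancel. rewrite <- L1. rewrite vadd0. reflexivity.
Qed.

Lemma linN (H : InnerProductSpace) (T : H -> H) b : linear_op T -> T (vopp H b) = vopp H (T b).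
Proof.
  intros L. apply vopp_uniq. rewrite <- (proj1 L), vaddN. apply lin0; exact L.
Qed.

Lemma linsub (H : InnerProductSpace) (T : H -> H) a b : linear_op T -> T (vsub a b) = vsub (T a) (T b).
Proof. intros L. unfold vsub. rewrite (proj1 L), linN by exact L. reflexivity. Qed.

Lemma scal0 (H : InnerProductSpace) c : vscal H c (vzero H) = vzero H.
Proof. apply vcancel. rewrite <- vscalDr, vadd0. reflexivity. Qed.

Lemma scal_sub (H : InnerProductSpace) c (u w : H) :
  vscal H c (vsub u w) = vsub (vscal H c u) (vscal H c w).
Proof.
  unfold vsub. rewrite vscalDr. f_equal. apply vopp_uniq.
  rewrite <- vscalDr, vaddN. apply scal0.
Qed.

Lemma Rsym (H : InnerProductSpace) (a b : H) : re (inner H a b) = re (inner H b a).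
Proof. rewrite (innerC H b a). reflexivity. Qed.

Lemma ReDl (H : InnerProductSpace) (x y z : H) :
  re (inner H (vadd H x y) z) = re (inner H x z) + re (inner H y z).
Proof. rewrite innerDl. reflexivity. Qed.

Lemma ReDr (H : InnerProductSpace) (x y z : H) :
  re (inner H z (vadd H x y)) = re (inner H z x) + re (inner H z y).
Proof. rewrite !(Rsym H z). apply ReDl. Qed.

Lemma Re0l (H : InnerProductSpace) (z : H) : re (inner H (vzero H) z) = 0.
Proof. pose proof (ReDl H (vzero H) (vzero H) z) as E. rewrite vadd0 in E. lra. Qed.

Lemma ReNl (H : InnerProductSpace) (x z : H) : re (inner H (vopp H x) z) = - re (inner H x z).
Proof. pose proof (ReDl H x (vopp H x) z) as E. rewrite vaddN, Re0l in E. lra. Qed.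

Lemma ReNr (H : InnerProductSpace) (x z : H) : re (inner H z (vopp H x)) = - re (inner H z x).
Proof. rewrite !(Rsym H z). apply ReNl. Qed.

Lemma ReZl (H : InnerProductSpace) t (x z : H) : re (inner H (vscal H (mkC t 0) x) z) = t * re (inner H x z).
Proof. rewrite innerZl. simpl. ring. Qed.

Lemma ReZr (H : InnerProductSpace) t (x z : H) : re (inner H z (vscal H (mkC t 0) x)) = t * re (inner H z x).
Proof. rewrite !(Rsym H z). apply ReZl. Qed.

Lemma N_add (H : InnerProductSpace) (a b : H) :
  nrm2 (vadd H a b) = nrm2 a + nrm2 b + 2 * re (inner H a b).
Proof. unfold nrm2. rewrite ReDl, !ReDr, (Rsym H b a). ring. Qed.

Lemma N_sub (H : InnerProductSpace) (a b : H) :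
  nrm2 (vsub a b) = nrm2 a + nrm2 b - 2 * re (inner H a b).
Proof. unfold vsub. rewrite N_add. unfold nrm2. rewrite ReNr, ReNl, ReNr. ring. Qed.

Lemma N_par (H : InnerProductSpace) (a b : H) :
  nrm2 (vadd H a b) + nrm2 (vsub a b) = 2 * nrm2 a + 2 * nrm2 b.
Proof. rewrite N_add, N_sub. ring. Qed.

Lemma N_scal (H : InnerProductSpace) t (x : H) : nrm2 (vscal H (mkC t 0) x) = t * t * nrm2 x.
Proof. unfold nrm2. rewrite ReZl, ReZr. ring. Qed.

Lemma N_ge0 (H : InnerProductSpace) (x : H) : 0 <= nrm2 x.
Proof. apply inner_ge0. Qed.

Lemma N_unit (H : InnerProductSpace) (T : H -> H) x : unitary T -> nrm2 (T x) = nrm2 x.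
Proof. intros [_ [I _]]. unfold nrm2. rewrite I. reflexivity. Qed.

Lemma N0 (H : InnerProductSpace) : nrm2 (vzero H) = 0.
Proof. unfold nrm2. apply Re0l. Qed.

Lemma Rsup_lub (E : R -> Prop) : (exists m, is_lub E m) -> is_lub E (Rsup E).
Proof.
  intro Hex. unfold Rsup.
  destruct (constructive_indefinite_description _ (Rsup_spec_ex E)) as [l [Hl|[Hn Hl0]]]; simpl;
    [exact Hl | contradiction].
Qed.

Lemma Rsup_bounded (E : R -> Prop) M : (exists e, E e) -> (forall e, E e -> e <= M) ->
  (forall e, E e -> e <= Rsup E) /\ Rsup E <= M.
Proof.
  intros Hne Hb.
  destruct (completeness E (ex_intro _ M Hb) Hne) as [m Hm].
  pose proof (Rsup_lub E (ex_intro _ m Hm)) as [H1 H2].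
  split; [exact H1 | apply H2; exact Hb].
Qed.

Lemma Rsup_nonneg (E : R -> Prop) : (exists e, E e /\ 0 <= e) -> 0 <= Rsup E.
Proof.
  intros [e [He He0]]. unfold Rsup.
  destruct (constructive_indefinite_description _ (Rsup_spec_ex E)) as [l [Hl|[Hn ->]]]; simpl.
  - apply Rle_trans with e; [exact He0 | apply Hl; exact He].
  - lra.
Qed.

Lemma Rinf_glb (E : R -> Prop) : (exists e, E e) -> (forall e, E e -> 0 <= e) ->
  (forall e, E e -> Rinf E <= e) /\ (forall m, (forall e, E e -> m <= e) -> m <= Rinf E).
Proof.
  intros [e0 He0] Hpos. unfold Rinf.
  set (F := fun r => E (- r)).
  assert (HF : exists r, F r) by (exists (- e0); unfold F; rewrite Ropp_involutive; exact He0).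
  assert (Hb : bound F) by (exists 0; intros r Hr; unfold F in Hr; apply Hpos in Hr; lra).
  destruct (completeness F Hb HF) as [m Hm].
  pose proof (Rsup_lub F (ex_intro _ m Hm)) as [H1 H2].
  split.
  - intros e He. assert (F (- e)) by (unfold F; rewrite Ropp_involutive; exact He).
    apply H1 in H. lra.
  - intros m' Hm'. assert (Rsup F <= - m').
    { apply H2. intros r Hr. unfold F in Hr. apply Hm' in Hr. lra. }
    lra.
Qed.

Lemma min_inf (A B : R -> Prop) c : (forall r, B r -> A r) -> (exists r, B r) ->
  (forall r, A r -> 0 <= r) -> (forall r, A r -> r < c -> B r) ->
  Rmin (Rinf A) c = Rmin (Rinf B) c.
Proof.
  intros BA [b Hb] Apos AB.
  destruct (Rinf_glb A (ex_intro _ b (BA b Hb)) Apos) as [A1 A2].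
  destruct (Rinf_glb B (ex_intro _ b Hb) (fun r Hr => Apos r (BA r Hr))) as [B1 B2].
  assert (Hle : Rinf A <= Rinf B) by (apply B2; intros e He; apply A1, BA, He).
  destruct (Rlt_or_le (Rinf A) c) as [Hc|Hc].
  - assert (Rinf B <= Rinf A).
    { destruct (Rle_or_lt (Rinf B) (Rinf A)) as [h|h]; [exact h|].
      exfalso.
      set (t := Rmin (Rinf B) c).
      assert (Ht : Rinf A < t) by (unfold t; apply Rmin_glb_lt; lra).
      destruct (classic (exists r, A r /\ r < t)) as [[r [Ar Hr]]|Hn].
      - assert (r < c) by (unfold t in Hr; pose proof (Rmin_r (Rinf B) c); lra).
        pose proof (B1 r (AB r Ar H)). pose proof (Rmin_l (Rinf B) c). unfold t in Hr. lra.
      - assert (t <= Rinf A).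
        { apply A2. intros e He. destruct (Rle_or_lt t e) as [h'|h']; [exact h'|].
          exfalso; apply Hn; exists e; split; assumption. }
        lra. }
    replace (Rinf B) with (Rinf A) by lra. reflexivity.
  - rewrite !Rmin_right by lra. reflexivity.
Qed.

Lemma gidem (G : Group) (y : G) : y = gmul G y y -> y = gone G.
Proof.
  intro E. transitivity (gmul G (gmul G y y) (ginv G y)).
  - rewrite <- gmulA, gmulV, gmul1; reflexivity.
  - rewrite <- E; apply gmulV.
Qed.

Lemma gmulVl (G : Group) (x : G) : gmul G (ginv G x) x = gone G.
Proof.
  apply gidem.
  rewrite (gmulA G (gmul G (ginv G x) x) (ginv G x) x).
  rewrite <- (gmulA G (ginv G x) x (ginv G x)). rewrite gmulV, gmul1. reflexivity.
Qed.

Lemma gmul1l (G : Group) (x : G) : gmul G (gone G) x = x.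
Proof. rewrite <- (gmulV G x), <- gmulA, gmulVl, gmul1. reflexivity. Qed.

Lemma hom1 (G K : Group) f : group_hom G K f -> f (gone G) = gone K.
Proof. intro Hf. apply gidem. rewrite <- Hf, gmul1. reflexivity. Qed.

Lemma vnorm_le1 (H : InnerProductSpace) (x : H) : vnorm x <= 1 <-> nrm2 x <= 1.
Proof.
  unfold vnorm. fold (nrm2 x). pose proof (N_ge0 H x).
  pose proof (sqrt_sqrt (nrm2 x) H0). pose proof (sqrt_pos (nrm2 x)).
  split; intro h.
  - nra.
  - rewrite <- sqrt_1. apply sqrt_le_1_alt; exact h.
Qed.

Lemma vnorm_le_sq (H : InnerProductSpace) (x : H) r : vnorm x <= r -> nrm2 x <= r * r.
Proof.
  unfold vnorm. fold (nrm2 x). pose proof (N_ge0 H x).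
  pose proof (sqrt_sqrt (nrm2 x) H0). pose proof (sqrt_pos (nrm2 x)). intro. nra.
Qed.

Lemma diff_bound (H : InnerProductSpace) (U W : H -> H) : unitary U -> unitary W ->
  forall x, vnorm x <= 1 -> vnorm (vsub (U x) (W x)) <= 2.
Proof.
  intros HU HW x Hx. apply vnorm_le1 in Hx.
  pose proof (N_par H (U x) (W x)) as E. rewrite (N_unit H U x HU), (N_unit H W x HW) in E.
  pose proof (N_ge0 H (vadd H (U x) (W x))).
  unfold vnorm. fold (nrm2 (vsub (U x) (W x))).
  rewrite <- (sqrt_square 2) by lra. apply sqrt_le_1_alt. lra.
Qed.

Lemma opnorm_props (H : InnerProductSpace) (A : H -> H) M : 0 <= M ->
  (forall x, vnorm x <= 1 -> vnorm (A x) <= M) ->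
  (forall x, vnorm x <= 1 -> vnorm (A x) <= opnorm A) /\ opnorm A <= M /\ 0 <= opnorm A.
Proof.
  intros HM Hb.
  assert (Hz : vnorm (vzero H) <= 1) by (apply vnorm_le1; rewrite N0; lra).
  destruct (Rsup_bounded (fun r => exists x : H, vnorm x <= 1 /\ r = vnorm (A x)) M) as [H1 H2].
  - exists (vnorm (A (vzero H))), (vzero H). split; [exact Hz | reflexivity].
  - intros e [x [Hx ->]]. apply Hb, Hx.
  - split; [|split].
    + intros x Hx. apply H1. exists x. split; [exact Hx|reflexivity].
    + exact H2.
    + apply Rsup_nonneg. exists (vnorm (A (vzero H))). split.
      * exists (vzero H). split; [exact Hz | reflexivity].
      * apply sqrt_pos.
Qed.

Lemma mapdist_props (G : Group) (H : InnerProductSpace) (mu nu : G -> H -> H) :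
  unitary_map mu -> unitary_map nu ->
  (forall g, opnorm (fun v => vsub (mu g v) (nu g v)) <= mapdist mu nu) /\ 0 <= mapdist mu nu.
Proof.
  intros Hmu Hnu.
  assert (Hop : forall g, opnorm (fun v => vsub (mu g v) (nu g v)) <= 2 /\
                           0 <= opnorm (fun v => vsub (mu g v) (nu g v))).
  { intro g. destruct (opnorm_props H (fun v => vsub (mu g v) (nu g v)) 2) as [_ [h1 h2]].
    - lra.
    - intros x Hx. apply diff_bound; auto.
    - split; assumption. }
  destruct (Rsup_bounded (fun r => exists g : G, r = opnorm (fun v => vsub (mu g v) (nu g v))) 2)
    as [H1 _].
  - exists (opnorm (fun v => vsub (mu (gone G) v) (nu (gone G) v))), (gone G). reflexivity.
  - intros e [g ->]. apply Hop.
  - split.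
    + intro g. apply H1. exists g; reflexivity.
    + apply Rsup_nonneg. exists (opnorm (fun v => vsub (mu (gone G) v) (nu (gone G) v))).
      split; [exists (gone G); reflexivity | apply Hop].
Qed.

Definition Qp {G : Group} {H : InnerProductSpace} (P : G -> Prop) (nu : G -> H -> H) (c : R) :=
  forall k, P k -> forall x : H, nrm2 (vsub x (nu k x)) <= c * nrm2 x.

Lemma Qp_mono {G : Group} {H : InnerProductSpace} P (nu : G -> H -> H) c c' :
  c <= c' -> Qp P nu c -> Qp P nu c'.
Proof.
  intros Hc HQ k Pk x. apply Rle_trans with (c * nrm2 x); [apply HQ, Pk|].
  apply Rmult_le_compat_r; [apply N_ge0 | exact Hc].
Qed.

Lemma Qp_step {G : Group} {H : InnerProductSpace} (P : G -> Prop) (nu : G -> H -> H) c :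
  unitary_rep nu -> (forall k, P k -> P (gmul G k k)) ->
  c < 4 -> Qp P nu c -> Qp P nu (c / (4 - c)).
Proof.
  intros [Hu Hh] HP Hc4 HQ k Pk x.
  set (V := nu k). pose proof (Hu k) as U. fold V in U.
  set (y := vsub x (V x)).
  pose proof (HQ (gmul G k k) (HP k Pk) x) as H1.
  assert (E0 : forall z, nu (gmul G k k) z = V (V z)) by (intro z; apply Hh).
  rewrite E0 in H1.
  assert (E : vsub x (V (V x)) = vadd H y (V y)).
  { unfold y. rewrite (linsub H V x (V x) (proj1 U)). unfold vsub.
    rewrite <- (vaddA H x).
    rewrite (vaddA H (vopp H (V x)) (V x)).
    rewrite (vaddC H (vopp H (V x)) (V x)), vaddN, vadd0l. reflexivity. }
  rewrite E in H1.
  pose proof (HQ k Pk y) as H2. fold V in H2.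
  pose proof (N_par H y (V y)) as H3. rewrite (N_unit H V y U) in H3.
  pose proof (N_ge0 H y). pose proof (N_ge0 H x).
  apply (Rmult_le_reg_r (4 - c)); [lra|].
  replace (c / (4 - c) * nrm2 x * (4 - c)) with (c * nrm2 x) by (field; lra).
  nra.
Qed.

Lemma homog (H : InnerProductSpace) (V : H -> H) c : linear_op V -> 0 <= c ->
  (forall x, nrm2 x <= 1 -> nrm2 (vsub x (V x)) <= c) ->
  forall x, nrm2 (vsub x (V x)) <= c * nrm2 x.
Proof.
  intros LV Hc Hb x. destruct (Req_dec (nrm2 x) 0) as [E|E].
  - apply inner_eq0 in E. subst x. rewrite (lin0 H V LV). unfold vsub. rewrite vaddN, N0. lra.
  - pose proof (N_ge0 H x) as Hn.
    assert (Np : 0 < nrm2 x) by lra.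
    set (q := sqrt (nrm2 x)).
    assert (Hq : q * q = nrm2 x) by (apply sqrt_sqrt; lra).
    assert (Hq0 : 0 < q) by (apply sqrt_lt_R0; lra).
    set (t := / q).
    set (z := vscal H (mkC t 0) x).
    assert (Hz : nrm2 z = 1).
    { unfold z. rewrite N_scal, <- Hq. unfold t. field. lra. }
    pose proof (Hb z (Req_le _ _ Hz)) as Hbz.
    unfold z in Hbz. rewrite (proj2 LV), <- scal_sub, N_scal in Hbz.
    set (s := nrm2 (vsub x (V x))) in *.
    pose proof (N_ge0 H (vsub x (V x))).
    replace s with (nrm2 x * (t * t * s)).
    + rewrite (Rmult_comm c). apply Rmult_le_compat_l; lra.
    + rewrite <- Hq. unfold t. field. lra.
Qed.

Lemma pow_le1 q n : 0 <= q -> q <= 1 -> q ^ n <= 1.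
Proof.
  intros h0 h1. induction n as [|n IH]; simpl; [lra|].
  pose proof (pow_le q n h0). nra.
Qed.

Lemma Qp_fix {G : Group} {H : InnerProductSpace} (P : G -> Prop) (nu : G -> H -> H) c0 :
  unitary_rep nu -> (forall k, P k -> P (gmul G k k)) ->
  0 <= c0 -> c0 < 3 -> Qp P nu c0 -> forall k, P k -> forall x, nu k x = x.
Proof.
  intros Hnu HP Hc0 Hc3 HQ.
  set (q := / (4 - c0)).
  assert (Hq0 : 0 < q) by (unfold q; apply Rinv_0_lt_compat; lra).
  assert (Hq1 : q < 1).
  { unfold q. rewrite <- Rinv_1. apply Rinv_lt_contravar; lra. }
  assert (Hall : forall n, Qp P nu (c0 * q ^ n)).
  { induction n as [|n IH].
    - simpl. rewrite Rmult_1_r. exact HQ.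
    - pose proof (pow_le1 q n ltac:(lra) ltac:(lra)) as h1.
      pose proof (pow_le q n ltac:(lra)) as h2.
      assert (hc : 0 <= c0 * q ^ n <= c0) by (split; nra).
      apply Qp_mono with (c0 * q ^ n / (4 - c0 * q ^ n)).
      + simpl. unfold Rdiv.
        replace (c0 * (q * q ^ n)) with (c0 * q ^ n * q) by ring.
        apply Rmult_le_compat_l; [lra|]. change (/ (4 - c0 * q ^ n) <= / (4 - c0)). apply Rinv_le_contravar; lra.
      + apply Qp_step; auto. lra. }
  intros k Pk x.
  symmetry. apply vsub0_eq. apply inner_eq0. fold (nrm2 (vsub x (nu k x))).
  set (a := nrm2 (vsub x (nu k x))).
  pose proof (N_ge0 H (vsub x (nu k x))) as Ha. fold a in Ha.
  pose proof (N_ge0 H x) as Hx.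
  set (K := c0 * nrm2 x).
  assert (HK : 0 <= K) by (unfold K; nra).
  destruct (Req_dec a 0) as [E|E]; [exact E|exfalso].
  assert (Hpos : 0 < a / (K + 1)) by (apply Rdiv_lt_0_compat; lra).
  destruct (pow_lt_1_zero q ltac:(rewrite Rabs_right; lra) _ Hpos) as [N HN].
  specialize (HN N (le_n N)). rewrite Rabs_right in HN by (apply Rle_ge, pow_le; lra).
  pose proof (Hall N k Pk x) as HA. fold a in HA.
  assert (a <= K * q ^ N) by (unfold K; nra).
  assert (K * q ^ N <= K * (a / (K + 1))) by (apply Rmult_le_compat_l; lra).
  assert (K * (a / (K + 1)) < a).
  { apply (Rmult_lt_reg_r (K + 1)); [lra|].
    replace (K * (a / (K + 1)) * (K + 1)) with (K * a) by (field; lra). nra. }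
  lra.
Qed.

Lemma id_rep (G : Group) (H : InnerProductSpace) : unitary_rep (fun (_ : G) (v : H) => v).
Proof.
  split.
  - intro g. split; [split; reflexivity|]. split; [reflexivity|]. intro y; exists y; reflexivity.
  - reflexivity.
Qed.

Theorem lemma1p2 (Gam Gam0 : Group) (pi : Gam -> Gam0)
  (Hpi_hom : group_hom Gam Gam0 pi) (Hpi_surj : forall y, exists x, pi x = y)
  (H : HilbertSpace) (mu : Gam0 -> H -> H)
  (Hmu : unitary_map mu) (Hmu_e : forall v, mu (gone Gam0) v = v) :
  defect mu = defect (fun g => mu (pi g)) /\
  Rmin (Dist (fun g => mu (pi g))) (sqrt 3) = Rmin (Dist mu) (sqrt 3).
Proof.
  split.
  - unfold defect. f_equal. apply functional_extensionality; intro r.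
    apply propositional_extensionality. split.
    + intros [x [y ->]]. destruct (Hpi_surj x) as [x' <-]. destruct (Hpi_surj y) as [y' <-].
      exists x', y'. cbv beta. rewrite Hpi_hom. reflexivity.
    + intros [x [y ->]]. exists (pi x), (pi y). cbv beta. rewrite Hpi_hom. reflexivity.
  - unfold Dist. apply min_inf.
    +
      intros r [nu [[Hnu1 Hnu2] ->]].
      exists (fun g => nu (pi g)). split.
      * split; [intro g; apply Hnu1|]. intros x y v. rewrite Hpi_hom. apply Hnu2.
      * unfold mapdist. f_equal. apply functional_extensionality; intro r.
        apply propositional_extensionality. split.
        -- intros [g ->]. destruct (Hpi_surj g) as [g' <-]. exists g'. reflexivity.
        -- intros [g ->]. exists (pi g). reflexivity.
    + exists (mapdist mu (fun _ v => v)). exists (fun _ v => v). split; [apply id_rep|reflexivity].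
    + intros r [nu [[Hnu1 _] ->]]. apply (mapdist_props Gam H); auto.
      intro g; apply Hmu.
    + intros r [nu [Hnu ->]] Hr.
      set (md := mapdist (fun g => mu (pi g)) nu) in *.
      assert (Hmp := mapdist_props Gam H (fun g => mu (pi g)) nu (fun g => Hmu (pi g)) (proj1 Hnu)).
      destruct Hmp as [Hmp1 Hmp2]. fold md in Hmp1, Hmp2.
      assert (Hker : forall k, pi k = gone Gam0 -> forall x, nu k x = x).
      { apply (Qp_fix (fun k => pi k = gone Gam0) nu (md * md) Hnu).
        - intros k Hk. rewrite Hpi_hom, Hk. apply gmul1.
        - nra.
        - pose proof (sqrt_sqrt 3 ltac:(lra)). nra.
        - intros k Hk. apply homog; [apply (proj1 Hnu k) | nra |].
          intros x Hx. apply vnorm_le_sq.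
          destruct (opnorm_props H (fun v => vsub (mu (pi k) v) (nu k v)) 2) as [Ho1 [_ _]].
          + lra.
          + intros y Hy. apply diff_bound; auto. apply (proj1 Hnu k).
          + apply vnorm_le1 in Hx. specialize (Ho1 x Hx). cbv beta in Ho1.
            rewrite Hk, Hmu_e in Ho1. eapply Rle_trans; [exact Ho1|].
            specialize (Hmp1 k). cbv beta in Hmp1. rewrite Hk in Hmp1. exact Hmp1. }
      assert (Hfib : forall h1 h2, pi h1 = pi h2 -> nu h1 = nu h2).
      { intros h1 h2 E. apply functional_extensionality; intro v.
        set (k := gmul Gam (ginv Gam h1) h2).
        assert (Ek : h2 = gmul Gam h1 k).
        { unfold k. rewrite gmulA, gmulV, gmul1l. reflexivity. }
        assert (Pk : pi k = gone Gam0).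
        { unfold k. rewrite Hpi_hom, <- E, <- Hpi_hom, gmulVl. apply hom1; exact Hpi_hom. }
        rewrite Ek, (proj2 Hnu), (Hker k Pk). reflexivity. }
      set (sig := fun y => proj1_sig (constructive_indefinite_description _ (Hpi_surj y))).
      assert (Hsig : forall y, pi (sig y) = y).
      { intro y. unfold sig. destruct (constructive_indefinite_description _ _); simpl; assumption. }
      exists (fun g => nu (sig g)). split.
      * split; [intro g; apply (proj1 Hnu)|].
        intros x y v. rewrite (Hfib (sig (gmul Gam0 x y)) (gmul Gam (sig x) (sig y))).
        -- apply (proj2 Hnu).
        -- rewrite Hpi_hom, !Hsig. reflexivity.
      * unfold md, mapdist. f_equal. apply functional_extensionality; intro r.
        apply propositional_extensionality. split.
        -- intros [g ->]. exists (pi g). cbv beta. rewrite (Hfib (sig (pi g)) g) by apply Hsig.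
           reflexivity.
        -- intros [g ->]. exists (sig g). cbv beta. rewrite Hsig. reflexivity.
Qed.
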